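(* Consider a discounted Markov decision problem with discount factor $\gamma\in(0,1)$ and the policy mirror descent method as described in the context, with $\pi^{(0)}\in\operatorname{rint}\Pi$. Let $\rho\in\Delta(\mathcal{S})$ and $\vartheta_\rho=\frac1{1-\gamma}\bigl\|d_\rho(\pi^\star)/\rho\bigr\|_\infty$. Suppose the step sizes satisfy $\eta_0>0$ and \[ \eta_{k+1}\ge\frac{\vartheta_\rho}{\vartheta_\rho-1}\eta_k,\qquad k=0,1,2,\dots \] Then for each $k\ge0$, \[ V_\rho(\pi^{(k)})-V_\rho^\star\le\Bigl(1-\frac1{\vartheta_\rho}\Bigr)^k\Bigl(V_\rho(\pi^{(0)})-V_\rho^\star+\frac{D^\star_0}{\eta_0\gamma}\Bigr). \]
   Context: A discounted Markov decision problem (cost-minimization form): finite state set $\mathcal{S}$, finite action set $\mathcal{A}$, transition probabilities $P(s'|s,a)$, cost $R:\mathcal{S}\times\mathcal{A}\to[0,1]$, discount $\gamma$. Policies $\Pi=\Delta(\mathcal{A})^{|\mathcal{S}|}$; $\operatorname{rint}\Pi$ is the set of policies with all entries $\pi_{s,a}>0$. $V_s(\pi)=\mathbf{E}\bigl[\sum_{t\ge0}\gamma^tR(s_t,a_t)\mid s_0=s\bigr]$ with $a_t\sim\pi_{s_t}$, $s_{t+1}\sim P(\cdot|s_t,a_t)$; $V_\rho(\pi)=\sum_s\rho_sV_s(\pi)$; $V^\star_\rho=\min_{\pi\in\Pi}V_\rho(\pi)$; $\pi^\star$ denotes a policy minimizing $V_s$ simultaneously for all $s$. $Q_{s,a}(\pi)=R_{s,a}+\gamma\sum_{s'}P(s'|s,a)V_{s'}(\pi)$,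 $Q_s(\pi)\in\mathbf{R}^{|\mathcal{A}|}$. Discounted state visitation: $d_{s,s'}(\pi)=(1-\gamma)\sum_{t\ge0}\gamma^t\Pr^\pi(s_t=s'\mid s_0=s)$, $d_{\rho,s'}(\pi)=\sum_s\rho_sd_{s,s'}(\pi)$. For $p,q\in\Delta(\mathcal{S})$, $\|p/q\|_\infty=\max_sp_s/q_s$ with $0/0=1$. Bregman divergence: $h:\mathbf{R}^{|\mathcal{A}|}\to\mathbf{R}\cup\{+\infty\}$ is a convex function of Legendre type (proper, closed, essentially smooth, strictly convex on the relative interior of its domain) with $\Delta(\mathcal{A})\subseteq\operatorname{dom}h$ and $\operatorname{rint}\Delta(\mathcal{A})\subseteq\operatorname{rint}\operatorname{dom}h$; $D(p,p')=h(p)-h(p')-\langle\nabla h(p'),p-p'\rangle$. Policy mirror descent: for each $s\in\mathcal{S}$, $\pi^{(k+1)}_s=\arg\min_{p\in\Delta(\mathcal{A})}\{\eta_k\langle Q_s(\pi^{(k)}),p\rangle+D(p,\pi^{(k)}_s)\}$. Notation: $D^\star_k=\sum_{s}d_{\rho,s}(\pi^\star)D(\pi^\star_s,\pi^{(k)}_s)$. *)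

(* Defs.v *)
From HB Require Import structures.
From mathcomp Require Import all_boot all_order all_algebra.
From mathcomp Require Import all_classical all_reals all_analysis.
Set Implicit Arguments. Unset Strict Implicit. Unset Printing Implicit Defensive.
Import Order.TTheory GRing.Theory Num.Theory.
Import numFieldNormedType.Exports.
Local Open Scope classical_set_scope.
Local Open Scope ring_scope.

Section MDP.
Variables (R : realType) (S : finType) (n : nat).
(* actions are 'I_n ; distributions over actions are row vectors 'rV[R]_n *)

Definition in_simplex (p : 'rV[R]_n) : Prop :=
  (forall a, 0 <= p 0 a) /\ \sum_a p 0 a = 1.
Definition in_rint_simplex (p : 'rV[R]_n) : Prop :=
  (forall a, 0 < p 0 a) /\ \sum_a p 0 a = 1.
Definition is_distr (rho : S -> R) : Prop :=
  (forall s, 0 <= rho s) /\ \sum_s rho s = 1.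

Definition policy := S -> 'rV[R]_n.
Definition in_Pi (pi : policy) : Prop := forall s, in_simplex (pi s).
Definition in_rint_Pi (pi : policy) : Prop := forall s, in_rint_simplex (pi s).

Variables (P : S -> 'I_n -> S -> R) (Rc : S -> 'I_n -> R) (gamma : R).

Definition Ppi (pi : policy) (s s' : S) : R := \sum_a pi s 0 a * P s a s'.
Definition rpi (pi : policy) (s : S) : R := \sum_a pi s 0 a * Rc s a.

(* Pr^pi(s_t = s' | s_0 = s) *)
Fixpoint stepP (pi : policy) (t : nat) (s s' : S) : R :=
  match t with
  | 0 => (s == s')%:R
  | t'.+1 => \sum_s'' stepP pi t' s s'' * Ppi pi s'' s'
  end.

Definition V (pi : policy) (s : S) : R :=
  limn (fun N => \sum_(0 <= t < N) gamma ^+ t * \sum_s' stepP pi t s s' * rpi pi s').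
Definition Vrho (rho : S -> R) (pi : policy) : R := \sum_s rho s * V pi s.
Definition Vstar (rho : S -> R) : R := inf [set Vrho rho pi | pi in in_Pi].

Definition Q (pi : policy) (s : S) : 'rV[R]_n :=
  \row_a (Rc s a + gamma * \sum_s' P s a s' * V pi s').

Definition dvis (pi : policy) (s s' : S) : R :=
  (1 - gamma) * limn (fun N => \sum_(0 <= t < N) gamma ^+ t * stepP pi t s s').
Definition dvis_rho (rho : S -> R) (pi : policy) (s' : S) : R :=
  \sum_s rho s * dvis pi s s'.

(* ||p/q||_oo = max_s p_s/q_s with 0/0 = 1 (and p_s/0 = +oo for p_s > 0) *)
Definition ratio_norm (p q : S -> R) : \bar R :=
  \big[Order.max/-oo%E]_s
    (if q s == 0 then (if p s == 0 then 1%E else +oo%E) else (p s / q s)%:E).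
Definition vartheta (rho : S -> R) (pistar : policy) : \bar R :=
  ((1 - gamma)^-1)%:E * ratio_norm (dvis_rho rho pistar) rho.
End MDP.

Section Bregman.
Variables (R : realType) (n : nat).
Local Notation V := 'rV[R]_n.

Definition domh (h : V -> \bar R) : set V := [set x | (h x < +oo)%E].

(* gradient of h at x (h is differentiable there when x is in int dom h) *)
Definition gradh (h : V -> \bar R) (x : V) : V :=
  \row_j ('d (fine \o h) x (delta_mx 0 j : V)).

(* convex function of Legendre type (Rockafellar, Sect. 26) *)
Definition legendre (h : V -> \bar R) : Prop :=
  [/\ (forall x, h x != -oo%E) /\ (exists x, (h x < +oo)%E),
      (forall (x y : V) (t : R), 0 < t < 1 ->
          (h (t *: x + (1 - t) *: y)%R <= t%:E * h x + (1 - t)%:E * h y)%E),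
        closed [set xy : V * R | (h xy.1 <= xy.2%:E)%E],
        [/\ (exists x, interior (domh h) x),
            (forall x, interior (domh h) x -> differentiable (fine \o h) x) &
            (forall (u : nat -> V) (x : V), (forall i, interior (domh h) (u i)) ->
               u @ \oo --> x -> ~ interior (domh h) x ->
               (fun i => `|gradh h (u i)|) @ \oo --> +oo)] &
        (forall (x y : V) (t : R), interior (domh h) x -> interior (domh h) y ->
           x != y -> 0 < t < 1 ->
           fine (h (t *: x + (1 - t) *: y)) < t * fine (h x) + (1 - t) * fine (h y))].

(* Bregman divergence D(p,p') = h(p) - h(p') - <grad h(p'), p - p'>
   (real-valued; used only for p, p' in Delta(A), a subset of dom h) *)
Definition bregman (h : V -> \bar R) (p p' : V) : R :=
  fine (h p) - fine (h p') - 'd (fine \o h) p' (p - p').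
End Bregman.

Definition dotv (R : realType) (n : nat) (u v : 'rV[R]_n) : R :=
  \sum_a u 0 a * v 0 a.

(* Main.v *)
Require Import Defs.
From HB Require Import structures.
From mathcomp Require Import all_boot all_order all_algebra.
From mathcomp Require Import all_classical all_reals all_analysis.
From mathcomp Require Import ring lra.
Import Order.TTheory GRing.Theory Num.Theory.
Import numFieldNormedType.Exports.
Local Open Scope classical_set_scope.
Local Open Scope ring_scope.
Section MDPfacts.
Variables (R : realType) (S : finType) (n : nat).
Variables (P : S -> 'I_n -> S -> R) (Rc : S -> 'I_n -> R) (gamma : R).
Hypothesis HP : forall s a, (forall s', 0 <= P s a s') /\ \sum_s' P s a s' = 1.
Hypothesis Hg : 0 < gamma < 1.

Lemma cvg_fsum (I : finType) (f : I -> nat -> R) (l : I -> R) :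
  (forall i, f i N @[N --> \oo] --> l i) ->
  (\sum_i f i N) @[N --> \oo] --> \sum_i l i.
Proof.
move=> H; elim: (index_enum I) => [|i r IH].
  under eq_fun do rewrite big_nil; rewrite big_nil; exact: cvg_cst.
under eq_fun do rewrite big_cons; rewrite big_cons; exact: cvgD.
Qed.

Section Pol.
Variable pi : policy R S n.
Hypothesis Hpi : in_Pi pi.

Lemma Ppi_ge0 s s' : 0 <= Ppi P pi s s'.
Proof. apply: sumr_ge0 => a _; apply: mulr_ge0; [exact: (Hpi s).1 | exact: (HP s a).1]. Qed.

Lemma Ppi_sum1 s : \sum_s' Ppi P pi s s' = 1.
Proof.
rewrite /Ppi exchange_big /=.
under eq_bigr => a _ do rewrite -mulr_sumr (HP s a).2 mulr1.
exact: (Hpi s).2.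
Qed.

Lemma stepP_ge0 t s s' : 0 <= stepP P pi t s s'.
Proof.
elim: t s' => [|t IH] s' /=; first by rewrite ler0n.
by apply: sumr_ge0 => u _; apply: mulr_ge0 => //; exact: Ppi_ge0.
Qed.

Lemma stepP_sum1 t s : \sum_s' stepP P pi t s s' = 1.
Proof.
elim: t => [|t IH] /=.
  by rewrite (bigD1 s) //= eqxx big1 ?addr0 // => s' /negbTE; rewrite eq_sym => ->.
rewrite exchange_big /=.
under eq_bigr => u _ do rewrite -mulr_sumr Ppi_sum1 mulr1.
exact: IH.
Qed.

Lemma stepP_le1 t s s' : stepP P pi t s s' <= 1.
Proof.
rewrite -(stepP_sum1 t s) (bigD1 s') //= lerDl.
by apply: sumr_ge0 => u _; exact: stepP_ge0.
Qed.

Lemma stepP_S t s s' :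
  stepP P pi t.+1 s s' = \sum_u stepP P pi t s u * Ppi P pi u s'.
Proof. by []. Qed.

Lemma stepP_left t s s' :
  stepP P pi t.+1 s s' = \sum_u Ppi P pi s u * stepP P pi t u s'.
Proof.
elim: t s' => [|t IH] s'.
  rewrite /= (bigD1 s) //= eqxx mul1r big1 ?addr0.
    rewrite (bigD1 s') //= eqxx mulr1 big1 ?addr0 // => u /negbTE ->; by rewrite mulr0.
  by move=> u /negbTE; rewrite eq_sym => ->; rewrite mul0r.
rewrite [LHS]stepP_S.
under eq_bigr => u _ do rewrite IH mulr_suml.
rewrite exchange_big /=; apply: eq_bigr => w _.
by rewrite mulr_sumr; apply: eq_bigr => u _; rewrite mulrA.
Qed.

Definition cN N s s' := \sum_(0 <= t < N) gamma ^+ t * stepP P pi t s s'.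

Lemma geo_le N : \sum_(0 <= t < N) gamma ^+ t <= (1 - gamma)^-1.
Proof.
case/andP: Hg => g0 g1.
have h1 : 0 < 1 - gamma by rewrite subr_gt0.
elim: N => [|N IH]; first by rewrite big_geq // invr_ge0 ltW.
rewrite big_nat_recl //= expr0.
under eq_bigr => t _ do rewrite exprS.
rewrite -mulr_sumr.
have : 1 + gamma * (1 - gamma)^-1 = (1 - gamma)^-1.
  by field; rewrite subr_eq0 eq_sym lt_eqF.
move=> <-; rewrite lerD2l; apply: ler_wpM2l => //; exact: ltW.
Qed.

Lemma cN_ge0 N s s' : 0 <= cN N s s'.
Proof.
apply: sumr_ge0 => t _; apply: mulr_ge0; last exact: stepP_ge0.
case/andP: Hg => g0 _; exact/exprn_ge0/ltW.
Qed.

Lemma cN_le N s s' : cN N s s' <= (1 - gamma)^-1.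
Proof.
apply: le_trans (geo_le N); apply: ler_sum => t _.
rewrite -[X in _ <= X]mulr1; apply: ler_wpM2l; last exact: stepP_le1.
case/andP: Hg => g0 _; exact/exprn_ge0/ltW.
Qed.

Lemma cN_S N s s' : cN N.+1 s s' = cN N s s' + gamma ^+ N * stepP P pi N s s'.
Proof. by rewrite /cN big_nat_recr. Qed.

Lemma cN_cvg s s' : cvgn (fun N => cN N s s').
Proof.
apply: nondecreasing_is_cvgn.
  apply/nondecreasing_seqP => N; rewrite cN_S lerDl; apply: mulr_ge0; last exact: stepP_ge0.
  case/andP: Hg => g0 _; exact/exprn_ge0/ltW.
exists (1 - gamma)^-1 => _ [N _ <-]; exact: cN_le.
Qed.

Definition W s s' := limn (fun N => cN N s s').

Lemma W_ge0 s s' : 0 <= W s s'.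
Proof. apply: limr_ge (cN_cvg s s') _; apply: nearW => N; exact: cN_ge0. Qed.


Lemma cN_right N s s' :
  cN N.+1 s s' = (s == s')%:R + gamma * \sum_u cN N s u * Ppi P pi u s'.
Proof.
rewrite /cN big_nat_recl // expr0 mul1r; congr (_ + _).
under eq_bigr do rewrite exprS stepP_S mulr_sumr.
rewrite [RHS]mulr_sumr.
under [RHS]eq_bigr => u _ do rewrite mulr_suml mulr_sumr.
rewrite [RHS]exchange_big /=; apply: eq_bigr => t _; apply: eq_bigr => u _.
by rewrite !mulrA.
Qed.

Lemma cN_left N s s' :
  cN N.+1 s s' = (s == s')%:R + gamma * \sum_u Ppi P pi s u * cN N u s'.
Proof.
rewrite /cN big_nat_recl // expr0 mul1r; congr (_ + _).
under eq_bigr do rewrite exprS stepP_left mulr_sumr.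
rewrite [RHS]mulr_sumr.
under [RHS]eq_bigr => u _ do rewrite mulr_sumr mulr_sumr.
rewrite [RHS]exchange_big /=; apply: eq_bigr => t _; apply: eq_bigr => u _.
by ring.
Qed.

Lemma W_cvg s s' : cN N s s' @[N --> \oo] --> W s s'.
Proof. exact: cN_cvg. Qed.

Lemma W_right s s' : W s s' = (s == s')%:R + gamma * \sum_u W s u * Ppi P pi u s'.
Proof.
have H1 : cN N.+1 s s' @[N --> \oo] --> W s s'.
  by rewrite (cvg_shiftS (fun N => cN N s s')); exact: W_cvg.
have H2 : cN N.+1 s s' @[N --> \oo] -->
   (s == s')%:R + gamma * \sum_u W s u * Ppi P pi u s'.
  under eq_fun do rewrite cN_right.
  apply: cvgD; first exact: cvg_cst.
  apply: cvgMr; apply: cvg_fsum => u; apply: cvgMl; exact: W_cvg.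
exact: (cvg_unique _ H1 H2).
Qed.

Lemma W_left s s' : W s s' = (s == s')%:R + gamma * \sum_u Ppi P pi s u * W u s'.
Proof.
have H1 : cN N.+1 s s' @[N --> \oo] --> W s s'.
  by rewrite (cvg_shiftS (fun N => cN N s s')); exact: W_cvg.
have H2 : cN N.+1 s s' @[N --> \oo] -->
   (s == s')%:R + gamma * \sum_u Ppi P pi s u * W u s'.
  under eq_fun do rewrite cN_left.
  apply: cvgD; first exact: cvg_cst.
  apply: cvgMr; apply: cvg_fsum => u; apply: cvgMr; exact: W_cvg.
exact: (cvg_unique _ H1 H2).
Qed.

Lemma W_diag s s' : (s == s')%:R <= W s s'.
Proof.
rewrite W_right lerDl; apply: mulr_ge0; first by case/andP: Hg => /ltW.
apply: sumr_ge0 => u _; apply: mulr_ge0; [exact: W_ge0 | exact: Ppi_ge0].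
Qed.

Lemma W_sum s : \sum_s' W s s' = (1 - gamma)^-1.
Proof.
have E1 : \sum_s' W s s' = \sum_s' (s == s')%:R +
    gamma * \sum_s' \sum_u W s u * Ppi P pi u s'.
  by rewrite mulr_sumr -big_split; apply: eq_bigr => s' _; rewrite W_right.
have E2 : \sum_s' ((s == s')%:R : R) = 1.
  rewrite (bigD1 s) //= eqxx big1 ?addr0 // => s' /negbTE.
  by rewrite eq_sym => ->.
have E3 : \sum_s' \sum_u W s u * Ppi P pi u s' = \sum_u W s u.
  rewrite exchange_big /=; apply: eq_bigr => u _.
  by rewrite -mulr_sumr Ppi_sum1 mulr1.
have E : \sum_s' W s s' = 1 + gamma * \sum_s' W s s'.
  by rewrite {1}E1 E2 E3.
case/andP: Hg => g0 g1.
have h1 : 1 - gamma != 0 by rewrite subr_eq0 eq_sym lt_eqF.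
apply: (mulfI h1); rewrite mulrV ?unitfE // mulrBl mul1r {1}E; ring.
Qed.

Lemma V_W s : V P Rc gamma pi s = \sum_s' W s s' * rpi Rc pi s'.
Proof.
apply: cvg_lim => //.
have -> : (fun N => \sum_(0 <= t < N) gamma ^+ t *
      \sum_s' stepP P pi t s s' * rpi Rc pi s') =
   (fun N => \sum_s' cN N s s' * rpi Rc pi s').
  apply: funext => N; rewrite /cN.
  under eq_bigr do rewrite mulr_sumr.
  rewrite exchange_big /=; apply: eq_bigr => s' _.
  by rewrite mulr_suml; apply: eq_bigr => t _; rewrite mulrA.
apply: cvg_fsum => s'; apply: cvgMl; exact: W_cvg.
Qed.

Lemma dvis_W s s' : dvis P gamma pi s s' = (1 - gamma) * W s s'.
Proof. by []. Qed.

End Pol.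
Lemma dotQ (pi pi' : policy R S n) s :
  dotv (Q P Rc gamma pi s) (pi' s) =
  rpi Rc pi' s + gamma * \sum_u Ppi P pi' s u * V P Rc gamma pi u.
Proof.
rewrite /dotv /rpi /Ppi.
under eq_bigr do rewrite mxE mulrDl.
rewrite big_split /=; congr (_ + _).
  by apply: eq_bigr => a _; rewrite mulrC.
rewrite mulr_sumr; under [RHS]eq_bigr do rewrite mulr_suml mulr_sumr.
rewrite [RHS]exchange_big /=; apply: eq_bigr => a _.
rewrite mulr_sumr mulr_suml; apply: eq_bigr => u _; ring.
Qed.

Lemma bellman (pi : policy R S n) : in_Pi pi -> forall s,
  V P Rc gamma pi s = rpi Rc pi s + gamma * \sum_u Ppi P pi s u * V P Rc gamma pi u.
Proof.
move=> Hpi s.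
rewrite V_W //.
under eq_bigr do rewrite (W_left _ Hpi) mulrDl.
rewrite big_split /=; congr (_ + _).
  rewrite (bigD1 s) //= eqxx mul1r big1 ?addr0 // => s' /negbTE.
  by rewrite eq_sym => ->; rewrite mul0r.
rewrite mulr_sumr; under [RHS]eq_bigr do rewrite V_W // mulr_sumr mulr_sumr.
rewrite [RHS]exchange_big /=; apply: eq_bigr => s' _.
rewrite -[RHS]mulr_sumr -mulrA; congr (_ * _).
rewrite [RHS](eq_bigr (fun u => Ppi P pi s u * W pi u s' * rpi Rc pi s')) => [|u _].
  by rewrite -[RHS]mulr_suml.
by rewrite mulrA.
Qed.

Lemma bellman_dot (pi : policy R S n) : in_Pi pi -> forall s,
  dotv (Q P Rc gamma pi s) (pi s) = V P Rc gamma pi s.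
Proof. by move=> Hpi s; rewrite dotQ bellman. Qed.

Lemma pdl_W (pi pi' : policy R S n) : in_Pi pi -> in_Pi pi' -> forall s,
  \sum_s' W pi' s s' *
     (dotv (Q P Rc gamma pi s') (pi' s') - dotv (Q P Rc gamma pi s') (pi s'))
  = V P Rc gamma pi' s - V P Rc gamma pi s.
Proof.
move=> Hpi Hpi' s.
set Vp := V P Rc gamma pi.
have H1 : \sum_s' W pi' s s' * (gamma * \sum_u Ppi P pi' s' u * Vp u)
   = \sum_u (W pi' s u - (s == u)%:R) * Vp u.
  transitivity (\sum_s' \sum_u gamma * (W pi' s s' * (Ppi P pi' s' u * Vp u))).
    apply: eq_bigr => s' _; rewrite mulr_sumr mulr_sumr.
    by apply: eq_bigr => u _; ring.
  rewrite exchange_big /=; apply: eq_bigr => u _.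
  rewrite (W_right _ Hpi' s u) [(_ == _)%:R + _]addrC addrK.
  rewrite -mulrA mulr_suml mulr_sumr; apply: eq_bigr => s' _; ring.
have H2 : \sum_u ((s == u)%:R : R) * Vp u = Vp s.
  rewrite (bigD1 s) //= eqxx mul1r big1 ?addr0 // => u /negbTE.
  by rewrite eq_sym => ->; rewrite mul0r.
have -> : \sum_s' W pi' s s' *
     (dotv (Q P Rc gamma pi s') (pi' s') - dotv (Q P Rc gamma pi s') (pi s'))
  = \sum_s' W pi' s s' * rpi Rc pi' s' +
    \sum_s' W pi' s s' * (gamma * \sum_u Ppi P pi' s' u * Vp u) -
    \sum_s' W pi' s s' * Vp s'.
  rewrite -big_split -sumrB /=; apply: eq_bigr => s' _.
  by rewrite bellman_dot // dotQ; rewrite -/Vp; ring.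
rewrite -V_W // H1.
under eq_bigr do rewrite mulrBl.
rewrite sumrB H2; ring.
Qed.

Section Rho.
Variable rho : S -> R.
Hypothesis Hrho : is_distr rho.

Lemma pdl_rho (pi pi' : policy R S n) : in_Pi pi -> in_Pi pi' ->
  \sum_s' dvis_rho P gamma rho pi' s' *
     (dotv (Q P Rc gamma pi s') (pi' s') - dotv (Q P Rc gamma pi s') (pi s'))
  = (1 - gamma) * (Vrho P Rc gamma rho pi' - Vrho P Rc gamma rho pi).
Proof.
move=> Hpi Hpi'.
rewrite /Vrho -sumrB mulr_sumr.
under [RHS]eq_bigr do rewrite -mulrBr -(pdl_W _ _ Hpi Hpi') !mulr_sumr.
rewrite exchange_big /=; apply: eq_bigr => s' _.
rewrite /dvis_rho mulr_suml; apply: eq_bigr => s _.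
rewrite dvis_W; ring.
Qed.

Lemma dvis_ge0 (pi : policy R S n) s s' : in_Pi pi -> 0 <= dvis P gamma pi s s'.
Proof.
move=> Hpi; rewrite dvis_W; apply: mulr_ge0; last exact: W_ge0.
by case/andP: Hg => _ g1; rewrite subr_ge0 ltW.
Qed.

Lemma dvis_rho_ge0 (pi : policy R S n) s' : in_Pi pi -> 0 <= dvis_rho P gamma rho pi s'.
Proof.
move=> Hpi; apply: sumr_ge0 => s _; apply: mulr_ge0; [exact: Hrho.1 | exact: dvis_ge0].
Qed.

Lemma dvis_rho_ge (pi : policy R S n) s' : in_Pi pi ->
  (1 - gamma) * rho s' <= dvis_rho P gamma rho pi s'.
Proof.
move=> Hpi; rewrite /dvis_rho (bigD1 s') //=.
apply: ler_wpDr.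
  apply: sumr_ge0 => s _; apply: mulr_ge0; [exact: Hrho.1 | exact: dvis_ge0].
rewrite dvis_W mulrCA -[X in X <= _]mulr1 -mulrA; apply: ler_wpM2l.
  by case/andP: Hg => _ g1; rewrite subr_ge0 ltW.
apply: ler_wpM2l; first exact: Hrho.1.
by have := W_diag _ Hpi s' s'; rewrite eqxx.
Qed.

Lemma dvis_rho_sum (pi : policy R S n) : in_Pi pi ->
  \sum_s' dvis_rho P gamma rho pi s' = 1.
Proof.
move=> Hpi; rewrite /dvis_rho exchange_big /= -[RHS]Hrho.2.
apply: eq_bigr => s _; rewrite -mulr_sumr.
under eq_bigr do rewrite dvis_W.
rewrite -mulr_sumr W_sum //.
case/andP: Hg => g0 g1.
by rewrite mulfV ?mulr1 // subr_eq0 eq_sym lt_eqF.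
Qed.

Lemma Vstar_eq (pistar : policy R S n) : in_Pi pistar ->
  (forall pi' s, in_Pi pi' -> V P Rc gamma pistar s <= V P Rc gamma pi' s) ->
  Vstar P Rc gamma rho = Vrho P Rc gamma rho pistar.
Proof.
move=> Hs Hopt; apply/eqP; rewrite eq_le; apply/andP; split.
  have : has_lbound [set Vrho P Rc gamma rho pi | pi in in_Pi (n:=n)].
    exists (Vrho P Rc gamma rho pistar) => _ [pi Hpi <-].
    apply: ler_sum => s _; apply: ler_wpM2l; [exact: Hrho.1 | exact: Hopt].
  move/ge_inf; apply; by exists pistar.
apply: lb_le_inf; first by exists (Vrho P Rc gamma rho pistar), pistar.
move=> _ [pi Hpi <-].
apply: ler_sum => s _; apply: ler_wpM2l; [exact: Hrho.1 | exact: Hopt].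
Qed.

End Rho.
End MDPfacts.

Section Conv.
Variables (R : realType) (n : nat) (h : 'rV[R]_n -> \bar R).
Hypothesis Hleg : legendre h.
Local Notation f := (fine \o h).

Lemma lim_le_seq {u : R^nat} {l b} : u m @[m --> \oo] --> l -> (forall m, u m <= b) -> l <= b.
Proof.
move=> L H; rewrite -(cvg_lim _ L) //; apply: limr_le; first by apply/cvg_ex; exists l.
exact: nearW.
Qed.

Lemma lim_ge_seq {u : R^nat} {l b} : u m @[m --> \oo] --> l -> (forall m, b <= u m) -> b <= l.
Proof.
move=> L H; rewrite -(cvg_lim _ L) //; apply: limr_ge; first by apply/cvg_ex; exists l.
exact: nearW.
Qed.

Lemma harm_gt0 m : 0 < harmonic m :> R.
Proof. exact: harmonic_gt0. Qed.

Lemma harm_le1 m : harmonic m <= 1 :> R.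
Proof. by rewrite /= invf_le1 // ?ler1n // ltr0n. Qed.

Lemma dir_lim (g : 'rV[R]_n -> R) x v : differentiable g x ->
  (harmonic m)^-1 * (g (harmonic m *: v + x) - g x) @[m --> \oo] --> 'd g x v.
Proof.
move=> Dg; rewrite -deriveE //.
have D := @diff_derivable _ _ _ g x v Dg.
apply: ((cvgr_dnbhsP _ 0 _).1 D harmonic).
split; last exact: cvg_harmonic.
by move=> m; rewrite gt_eqF // harm_gt0.
Qed.

Lemma dom_fin {x} : domh h x -> h x = (fine (h x))%:E.
Proof.
move=> Hx; rewrite fineK // fin_numE.
case: Hleg => [[Hnm _] _ _ _ _]; rewrite Hnm /=.
by rewrite (lt_eqF Hx).
Qed.

Lemma int_dom {x} : interior (domh h) x -> domh h x.
Proof. exact: nbhs_singleton. Qed.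

Lemma conv {t x y} : 0 < t <= 1 -> domh h x -> domh h y ->
  domh h (t *: (x - y) + y) /\
  f (t *: (x - y) + y) <= t * f x + (1 - t) * f y.
Proof.
move=> /andP[t0 t1] Hx Hy.
have [->|t1'] := eqVneq t 1.
  rewrite scale1r subrK; split => //; rewrite subrr mul0r mul1r addr0 //.
have tl1 : t < 1 by rewrite lt_neqAle t1' t1.
have E : t *: (x - y) + y = t *: x + (1 - t) *: y.
  by rewrite scalerBr scalerBl scale1r addrA addrAC.
case: Hleg => [_ Hc _ _ _].
have := Hc x y t; rewrite t0 tl1 => /(_ isT).
rewrite -E (dom_fin Hx) (dom_fin Hy) -!EFinM -EFinD => Hle.
have Hz : domh h (t *: (x - y) + y).
  by rewrite /domh /=; apply: le_lt_trans Hle _; exact: ltry.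
split => //.
by move: Hle; rewrite (dom_fin Hz) lee_fin.
Qed.


Lemma diff_int {q} : interior (domh h) q -> differentiable f q.
Proof. by case: Hleg => [_ _ _ [_ Hd _] _]; exact: Hd. Qed.

Lemma grad_ineq {q p} : interior (domh h) q -> domh h p -> 'd f q (p - q) <= f p - f q.
Proof.
move=> Iq Dp.
have L := @dir_lim f q (p - q) (diff_int Iq).
apply: lim_le_seq L _ => m.
set t := harmonic m.
have ht : 0 < t <= 1 by rewrite harm_gt0 harm_le1.
have [_ Hc] := conv ht Dp (int_dom Iq).
rewrite mulrC ler_pdivrMr ?harm_gt0 //.
move: Hc; rewrite /=; lra.
Qed.

Lemma bregman_ge0 p q : interior (domh h) q -> domh h p -> 0 <= bregman h p q.
Proof. move=> Iq Dp; have := grad_ineq Iq Dp; rewrite /bregman /=; lra. Qed.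

Lemma bregman_id q : bregman h q q = 0.
Proof. by rewrite /bregman !subrr linear0 subrr. Qed.


Lemma vec_id (a y x : 'rV[R]_n) : y = a + (y - (a + x)) + x.
Proof. by rewrite opprD !addrA subrK addrC addKr. Qed.

Lemma int_seg {x u t} : domh h x -> interior (domh h) u -> 0 < t <= 1 ->
  interior (domh h) (t *: (u - x) + x).
Proof.
move=> Dx Iu ht; have t0 : 0 < t by case/andP: ht.
move: Iu; rewrite /interior => /nbhs_ballP [e /= e0 Be].
apply/nbhs_ballP; exists (t * e); first by rewrite /= mulr_gt0.
move=> y; rewrite -ball_normE /= => Hy.
set z := t *: (u - x) + x in Hy *.
set w := u + t^-1 *: (y - z).
have Dw : domh h w.
  apply: Be; rewrite -ball_normE /= /w opprD addrA subrr add0r normrN normrZ.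
  rewrite ger0_norm ?invr_ge0 ?ltW // distrC mulrC ltr_pdivrMr //.
  by rewrite mulrC.
have -> : y = t *: (w - x) + x.
  rewrite /w addrAC scalerDr scalerA mulfV ?gt_eqF // scale1r /z.
  exact: vec_id.
exact: (conv ht Dw Dx).1.
Qed.


Lemma simplex_seg {x p : 'rV[R]_n} {t : R} : in_simplex x -> in_simplex p -> 0 <= t <= 1 ->
  in_simplex (t *: (p - x) + x).
Proof.
move=> [x0 x1] [p0 p1] /andP[t0 t1]; split.
  move=> a; rewrite !mxE; have := x0 a; have := p0 a; nra.
under eq_bigr do rewrite !mxE.
rewrite big_split /= -mulr_sumr.
rewrite sumrB p1 x1; ring.
Qed.

Lemma dotv_seg (Qv v w : 'rV[R]_n) t : dotv Qv (t *: v + w) = t * dotv Qv v + dotv Qv w.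
Proof.
rewrite /dotv mulr_sumr -big_split /=; apply: eq_bigr => a _; rewrite !mxE; ring.
Qed.

Lemma dotv_B (Qv p x : 'rV[R]_n) : dotv Qv (p - x) = dotv Qv p - dotv Qv x.
Proof.
rewrite /dotv -sumrB /=; apply: eq_bigr => a _; rewrite !mxE; ring.
Qed.

Lemma norm_row_le (M : 'rV[R]_n) (B : R) : 0 <= B -> (forall j, `|M 0 j| <= B) -> `|M| <= B.
Proof.
move=> B0 H. change (mx_norm M <= B). rewrite mx_normrE. apply: bigmax_le => //= [[i j]] _.
by rewrite ord1.
Qed.

Lemma norm_delta (j : 'I_n) : `|(delta_mx 0 j : 'rV[R]_n)| <= 1.
Proof.
change (mx_norm (delta_mx 0 j : 'rV[R]_n) <= 1). rewrite mx_normrE. apply: bigmax_le => //= [[i k]] _.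
rewrite mxE; case: (_ && _) => /=; by rewrite ?normr1 ?normr0.
Qed.

Hypothesis Hdom : forall p, in_simplex p -> domh h p.

Lemma smulE (a b : R) : a *: b = a * b.
Proof. by []. Qed.

Lemma min_interior (Qv : 'rV[R]_n) (eta : R) (q x u : 'rV[R]_n) :
  interior (domh h) q -> in_simplex x -> in_simplex u -> interior (domh h) u ->
  (forall p, in_simplex p ->
     eta * dotv Qv x + bregman h x q <= eta * dotv Qv p + bregman h p q) ->
  interior (domh h) x.
Proof.
move=> Iq Sx Su Iu Hmin.
have Dx := Hdom _ Sx.
case: (pselect (interior (domh h) x)) => // Nx; exfalso.
move: (Iu) => /nbhs_ballP [e /= e0 Be].
set eps := e / 2.
have eps0 : 0 < eps by rewrite /eps divr_gt0.
have epse : eps < e by rewrite /eps ltr_pdivrMr // ltr_pMr // ltr1n.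
set L0 := eta * dotv Qv (u - x) - 'd f q (u - x).
set ej := fun j : 'I_n => (delta_mx 0 j : 'rV[R]_n).
have Dyl : forall v, `|v| <= 1 -> domh h (u + eps *: v).
  move=> v Hv; apply: Be; rewrite -ball_normE /= opprD addrA subrr add0r normrN normrZ.
  rewrite ger0_norm ?ltW //; apply: le_lt_trans epse.
  by rewrite -[X in _ <= X]mulr1 ler_wpM2l // ltW.
set K := \sum_j (`|f (u + eps *: ej j)| + `|f (u + eps *: - ej j)|) + `|f x| + `|L0|.
have Kj : forall j, `|f (u + eps *: ej j)| + `|f (u + eps *: - ej j)| + `|f x| + `|L0| <= K.
  move=> j; rewrite /K lerD2r lerD2r (bigD1 j) //= lerDl.
  by apply: sumr_ge0 => i _; rewrite addr_ge0.
have K0 : 0 <= K by rewrite /K !addr_ge0 // sumr_ge0 // => i _; rewrite addr_ge0.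
have bound : forall t, 0 < t <= 1 -> `|gradh h (t *: (u - x) + x)| <= K / eps.
  move=> t ht; have t0 : 0 < t by case/andP: ht.
  have t1 : t <= 1 by case/andP: ht.
  set z := t *: (u - x) + x.
  have Iz : interior (domh h) z := int_seg Dx Iu ht.
  have Dz := int_dom Iz.
  have Sz : in_simplex z by apply: simplex_seg Sx Su _; rewrite ltW.
  have H1 : f x - f z <= t * L0.
    have := Hmin z Sz; rewrite /bregman.
    have E1 : 'd f q (z - q) = t * 'd f q (u - x) + 'd f q (x - q).
      by rewrite -linearZ -linearD /z addrA.
    rewrite E1 /z dotv_seg -/z /L0 /=; lra.
  have H2 : - L0 <= 'd f z (u - x).
    have := grad_ineq Iz Dx.
    have -> : x - z = - (t *: (u - x)) by rewrite /z opprD addrCA subrr addr0.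
    rewrite linearN linearZ /= => H.
    rewrite -(ler_pM2l t0); move: H1 H; rewrite /= ?smulE; lra.
  have H3 : forall v, `|v| <= 1 -> eps * 'd f z v <= f (u + eps *: v) - f x + L0.
    move=> v Hv; have := grad_ineq Iz (Dyl v Hv).
    have -> : u + eps *: v - z = (1 - t) *: (u - x) + eps *: v.
      rewrite addrAC; congr (_ + _).
      by rewrite /z scalerBl scale1r opprD addrA addrAC.
    rewrite linearD !linearZ /= ?smulE => H.
    have : (1 - t) * (- L0) <= (1 - t) * 'd f z (u - x).
      by rewrite ler_wpM2l // subr_ge0.
    move: H1 H; rewrite /=; lra.
  apply: norm_row_le; first by rewrite divr_ge0 // ltW.
  move=> j; rewrite mxE ler_pdivlMr //.
  have A1 := H3 (ej j) (norm_delta j).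
  have nd : `|- ej j| <= 1 by rewrite normrN norm_delta.
  have A2 := H3 _ nd.
  move: A2; rewrite linearN /= => A2.
  move: A1 A2; rewrite /= => A1 A2.
  have := Kj j.
  have := ler_norm (f (u + eps *: ej j)).
  have := ler_norm (f (u + eps *: - ej j)).
  have := ler_norm (- f x); rewrite normrN.
  have := ler_norm L0.
  move: A1 A2; set d := 'd f z (ej j) => A1 A2 B1 B2 B3 B4 B5.
  have : `|d * eps| <= K.
    have C1 := normr_ge0 (f (u + eps *: ej j)).
    have C2 := normr_ge0 (f (u + eps *: - ej j)).
    move: A1 A2 B1 B2 B3 B4 B5 C1 C2; rewrite /= => A1 A2 B1 B2 B3 B4 B5 C1 C2.
    rewrite ler_norml; apply/andP; split; lra.
  by rewrite normrM (ger0_norm (ltW eps0)).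
set zs := fun m => harmonic m *: (u - x) + x.
have Izs : forall m, interior (domh h) (zs m).
  by move=> m; apply: int_seg Dx Iu _; rewrite harm_gt0 harm_le1.
have Czs : zs m @[m --> \oo] --> x.
  have : zs m @[m --> \oo] --> 0 *: (u - x) + x.
    apply: cvgD; last exact: cvg_cst.
    apply: cvgZl; exact: cvg_harmonic.
  by rewrite scale0r add0r.
case: Hleg => [_ _ _ [_ _ Hbl] _].
have := Hbl zs x Izs Czs Nx.
move/cvgryPgt/(_ (K / eps)) => [N _ HN].
have := HN N (leqnn N) => /=.
have := bound (harmonic N); rewrite harm_gt0 harm_le1 => /(_ isT) b1 b2.
by have := lt_le_trans b2 b1; rewrite ltxx.
Qed.


Lemma tp_alg {eta dp dx fp fx fq a b c d : R} : d = b + c ->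
  0 <= eta * (dp - dx) + a - b ->
  eta * dx - eta * dp + (fx - fq - c) <= fp - fq - d - (fp - fx - a).
Proof. move=> ->; lra. Qed.

Lemma three_point (Qv : 'rV[R]_n) (eta : R) (q x p : 'rV[R]_n) :
  interior (domh h) q -> interior (domh h) x -> in_simplex x -> in_simplex p ->
  (forall p, in_simplex p ->
     eta * dotv Qv x + bregman h x q <= eta * dotv Qv p + bregman h p q) ->
  eta * dotv Qv x - eta * dotv Qv p + bregman h x q <= bregman h p q - bregman h p x.
Proof.
move=> Iq Ix Sx Sp Hmin.
have FO : 0 <= eta * dotv Qv (p - x) + 'd f x (p - x) - 'd f q (p - x).
  have L := @dir_lim f x (p - x) (diff_int Ix).
  have L2 : eta * dotv Qv (p - x) +
      (harmonic m)^-1 * (f (harmonic m *: (p - x) + x) - f x) - 'd f q (p - x)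
      @[m --> \oo] --> eta * dotv Qv (p - x) + 'd f x (p - x) - 'd f q (p - x).
    apply: cvgB; last exact: cvg_cst.
    apply: cvgD; [exact: cvg_cst | exact: L].
  apply: lim_ge_seq L2 _ => m.
  set t := harmonic m.
  have t0 : 0 < t := harm_gt0 m.
  have ht : 0 <= t <= 1 by rewrite ltW // harm_le1.
  set y := t *: (p - x) + x.
  have Sy : in_simplex y := simplex_seg Sx Sp ht.
  have := Hmin y Sy; rewrite /bregman.
  have E1 : 'd f q (y - q) = t * 'd f q (p - x) + 'd f q (x - q).
    by rewrite -linearZ -linearD /y addrA.
  rewrite E1 /y dotv_seg -/y => H.
  have H' : 0 <= t * (eta * dotv Qv (p - x)) + (f y - f x) - t * 'd f q (p - x).
    move: H; rewrite /=; lra.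
  have -> : eta * dotv Qv (p - x) + t^-1 * (f y - f x) - 'd f q (p - x) =
    t^-1 * (t * (eta * dotv Qv (p - x)) + (f y - f x) - t * 'd f q (p - x)).
    by field; rewrite gt_eqF.
  by rewrite mulr_ge0 // invr_ge0 ltW.
have E2 : 'd f q (p - q) = 'd f q (p - x) + 'd f q (x - q).
  by rewrite -linearD addrA subrK.
rewrite dotv_B in FO.
rewrite /bregman; exact: (tp_alg E2 FO).
Qed.

End Conv.
Lemma ratio_le (R : realType) (S : finType) (d rho : S -> R) (c th : R) : 0 < c ->
  ((c^-1)%:E * ratio_norm d rho = th%:E)%E -> (forall s, 0 <= rho s) ->
  forall s, d s <= th * c * rho s.
Proof.
move=> c0 E Hr s.
have Hle : ((if rho s == 0%R then (if d s == 0%R then 1%E else +oo%E) else (d s / rho s)%R%:E)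
   <= ratio_norm d rho)%E.
  exact: (le_bigmax _ (fun s => if rho s == 0%R then (if d s == 0%R then 1%E else +oo%E)
     else (d s / rho s)%R%:E) s).
move: E Hle; case: (ratio_norm d rho) => [r| |].
- move=> /eqP; rewrite -EFinM eqe => /eqP Er.
  have -> : th * c = r by rewrite -Er mulrAC mulVf ?mul1r // gt_eqF.
  have [r0|r0] := eqVneq (rho s) 0.
    rewrite r0 mulr0; case: eqVneq => [->|dn] //.
  rewrite lee_fin => H.
  have rp : 0 < rho s by rewrite lt_def r0 Hr.
  by rewrite -ler_pdivrMr.
- by move=> /eqP; rewrite mulr_infty gtr0_sg ?invr_gt0 // mul1e.
- by move=> /eqP; rewrite mulr_infty gtr0_sg ?invr_gt0 // mul1e.
Qed.

Lemma step_alg (R : realType) (th c e e1 a b Dk Dk1 : R) :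
  1 < th -> 0 < c -> 0 < e -> th / (th - 1) * e <= e1 -> 0 <= Dk1 ->
  e * (th * c * (b - a) + c * a) <= Dk - Dk1 ->
  b + Dk1 / (e1 * c * (th - 1)) <= (1 - th^-1) * (a + Dk / (e * c * (th - 1))).
Proof.
move=> th1 c0 e0 He1 D1 H.
have th0 : 0 < th - 1 by rewrite subr_gt0.
have thp : 0 < th by lra.
have the : th * e <= e1 * (th - 1).
  by rewrite -ler_pdivrMr // mulrAC.
have e1p : 0 < e1.
  apply: lt_le_trans He1; apply: mulr_gt0 => //; apply: divr_gt0 => //; lra.
have H1 : Dk1 / (e1 * c * (th - 1)) <= Dk1 / (e * th * c).
  apply: ler_wpM2l => //.
  have p1 : 0 < e * th * c by rewrite !mulr_gt0 //; lra.
  have p2 : 0 < e1 * c * (th - 1) by rewrite !mulr_gt0.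
  rewrite lef_pV2 ?posrE //; nra.
apply: (@le_trans _ _ (b + Dk1 / (e * th * c))); first by rewrite lerD2l.
have eq1 : b + Dk1 / (e * th * c) = (e * th * c * b + Dk1) / (e * th * c).
  by field; rewrite ?(gt_eqF c0) ?(gt_eqF e0) ?(gt_eqF th0) ?(gt_eqF thp).
have eq2 : (1 - th^-1) * (a + Dk / (e * c * (th - 1))) =
    ((th - 1) * e * c * a + Dk) / (e * th * c).
  by field; rewrite ?(gt_eqF c0) ?(gt_eqF e0) ?(gt_eqF th0) ?(gt_eqF thp).
rewrite eq1 eq2 ler_pM2r; last by rewrite invr_gt0 !mulr_gt0 //; lra.
lra.
Qed.

Theorem theorem10 (R : realType) (S : finType) (n : nat)
  (P : S -> 'I_n -> S -> R) (Rc : S -> 'I_n -> R) (gamma : R)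
  (h : 'rV[R]_n -> \bar R)
  (rho : S -> R) (pistar : policy R S n)
  (pi : nat -> policy R S n) (eta : nat -> R) (theta : R) :
  (* the MDP *)
  (forall s a, (forall s', 0 <= P s a s') /\ \sum_s' P s a s' = 1) ->
  (forall s a, 0 <= Rc s a <= 1) ->
  0 < gamma < 1 ->
  (* the mirror map *)
  legendre h ->
  (forall p, in_simplex p -> domh h p) ->
  (forall p, in_rint_simplex p -> interior (domh h) p) ->
  (* an optimal policy *)
  in_Pi pistar ->
  (forall pi' s, in_Pi pi' -> V P Rc gamma pistar s <= V P Rc gamma pi' s) ->
  is_distr rho ->
  (* vartheta_rho (finite) *)
  vartheta P gamma rho pistar = theta%:E ->
  (* policy mirror descent *)
  in_rint_Pi (pi 0%N) ->
  (forall k s, in_simplex (pi k.+1 s) /\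
     forall p, in_simplex p ->
       eta k * dotv (Q P Rc gamma (pi k) s) (pi k.+1 s) + bregman h (pi k.+1 s) (pi k s)
       <= eta k * dotv (Q P Rc gamma (pi k) s) p + bregman h p (pi k s)) ->
  (* step sizes *)
  0 < eta 0%N ->
  (forall k, eta k.+1 >= theta / (theta - 1) * eta k) ->
  forall k,
    Vrho P Rc gamma rho (pi k) - Vstar P Rc gamma rho
    <= (1 - theta^-1) ^+ k *
       (Vrho P Rc gamma rho (pi 0%N) - Vstar P Rc gamma rho
        + (\sum_s dvis_rho P gamma rho pistar s * bregman h (pistar s) (pi 0%N s))
          / (eta 0%N * gamma)).
Proof.
move=> HP HR Hg Hleg Hdom Hint Hs Hopt Hrho Htheta H0 Hpmd Heta0 Hstep.
have g0 : 0 < gamma by case/andP: Hg.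
have g1 : gamma < 1 by case/andP: Hg.
have c0 : 0 < 1 - gamma by rewrite subr_gt0.
have Sk : forall k s, in_simplex (pi k s).
  case => [|k] s; last exact: (Hpmd k s).1.
  by split; [move=> a; apply: ltW; exact: (H0 s).1 | exact: (H0 s).2].
have HPi : forall k, in_Pi (pi k) := Sk.
have HInt : forall k s, interior (domh h) (pi k s).
  elim => [|k IH] s; first exact: Hint (H0 s).
  exact: (@min_interior _ _ h Hleg Hdom _ _ _ _ _ (IH s) (Sk k.+1 s) (Sk 0%N s)
    (Hint _ (H0 s)) (Hpmd k s).2).
set dstar := dvis_rho P gamma rho pistar.
have ds0 : forall s, 0 <= dstar s := fun s =>
  @dvis_rho_ge0 _ _ _ P gamma HP Hg rho Hrho pistar s Hs.
have dsum : \sum_s dstar s = 1 := @dvis_rho_sum _ _ _ P gamma HP Hg rho Hrho pistar Hs.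
have dle : forall s, dstar s <= theta * (1 - gamma) * rho s.
  by apply: (@ratio_le _ _ dstar rho (1 - gamma) theta) => //; exact: Hrho.1.
have thc1 : 1 <= theta * (1 - gamma).
  have : \sum_s dstar s <= \sum_s theta * (1 - gamma) * rho s.
    by apply: ler_sum => s _; exact: dle.
  by rewrite dsum -mulr_sumr Hrho.2 mulr1.
have th1 : 1 < theta by nra.
have etapos : forall k, 0 < eta k.
  elim => [|k IH] //; apply: lt_le_trans (Hstep k); apply: mulr_gt0 => //.
  apply: divr_gt0; lra.
set c := 1 - gamma.
set Q' := Q P Rc gamma.
set A := fun k s => dotv (Q' (pi k) s) (pi k.+1 s) - dotv (Q' (pi k) s) (pi k s).
set B := fun k s => dotv (Q' (pi k) s) (pistar s) - dotv (Q' (pi k) s) (pi k s).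
have Aneg : forall k s, A k s <= 0.
  move=> k s; rewrite /A.
  have H1 := (Hpmd k s).2 (pi k s) (Sk k s).
  rewrite bregman_id addr0 in H1.
  have H2 := @bregman_ge0 _ _ h Hleg _ _ (HInt k s) (Hdom _ (Sk k.+1 s)).
  rewrite subr_le0 -(ler_pM2l (etapos k)); lra.
set Delta := fun k => Vrho P Rc gamma rho (pi k) - Vrho P Rc gamma rho pistar.
set Dk := fun k => \sum_s dstar s * bregman h (pistar s) (pi k s).
have Dk0 : forall k, 0 <= Dk k.
  move=> k; apply: sumr_ge0 => s _; apply: mulr_ge0 => //.
  exact: (@bregman_ge0 _ _ h Hleg _ _ (HInt k s) (Hdom _ (Hs s))).
have key : forall k, eta k * (theta * c * (Delta k.+1 - Delta k) + c * Delta k)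
    <= Dk k - Dk k.+1.
  move=> k.
  have TP : forall s, eta k * (A k s - B k s) <=
      bregman h (pistar s) (pi k s) - bregman h (pistar s) (pi k.+1 s).
    move=> s.
    have T := @three_point _ _ h Hleg _ _ _ _ _ (HInt k s) (HInt k.+1 s)
      (Sk k.+1 s) (Hs s) (Hpmd k s).2.
    have H2 := @bregman_ge0 _ _ h Hleg _ _ (HInt k s) (Hdom _ (Sk k.+1 s)).
    rewrite /A /B; lra.
  have S1 : \sum_s dstar s * B k s = - (c * Delta k).
    rewrite /B /dstar (@pdl_rho _ _ _ P Rc gamma HP Hg rho (pi k) pistar (HPi k) Hs).
    by rewrite /Delta -mulrN opprB.
  have S2 : \sum_s dvis_rho P gamma rho (pi k.+1) s * A k s = c * (Delta k.+1 - Delta k).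
    rewrite /A (@pdl_rho _ _ _ P Rc gamma HP Hg rho (pi k) (pi k.+1) (HPi k) (HPi k.+1)).
    by rewrite /Delta; congr (_ * _); ring.
  have I3 : \sum_s dvis_rho P gamma rho (pi k.+1) s * A k s <= c * \sum_s rho s * A k s.
    rewrite mulr_sumr; apply: ler_sum => s _; rewrite mulrA.
    rewrite ler_wnM2r //; exact: (@dvis_rho_ge _ _ _ P gamma HP Hg rho Hrho (pi k.+1) s (HPi k.+1)).
  have I4 : theta * c * \sum_s rho s * A k s <= \sum_s dstar s * A k s.
    rewrite mulr_sumr; apply: ler_sum => s _; rewrite mulrA.
    by rewrite ler_wnM2r // dle.
  have I5 : \sum_s dstar s * (eta k * (A k s - B k s)) <= Dk k - Dk k.+1.
    rewrite /Dk -sumrB; apply: ler_sum => s _; rewrite -mulrBr.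
    by apply: ler_wpM2l => //; exact: TP.
  have E5 : \sum_s dstar s * (eta k * (A k s - B k s)) =
      eta k * (\sum_s dstar s * A k s - \sum_s dstar s * B k s).
    rewrite -sumrB mulr_sumr; apply: eq_bigr => s _; ring.
  rewrite E5 S1 in I5.
  apply: le_trans I5; rewrite ler_pM2l ?etapos //.
  have : theta * (c * (Delta k.+1 - Delta k)) <= theta * (c * \sum_s rho s * A k s).
    rewrite ler_pM2l; last lra.
    by rewrite -S2.
  lra.
set Phi := fun k => Delta k + Dk k / (eta k * c * (theta - 1)).
have rec : forall k, Phi k.+1 <= (1 - theta^-1) * Phi k.
  move=> k; exact: (@step_alg _ _ _ _ _ _ _ _ _ th1 c0 (etapos k) (Hstep k) (Dk0 k.+1) (key k)).
have q0 : 0 <= 1 - theta^-1.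
  rewrite subr_ge0 invf_le1; lra.
have bnd : forall k, Phi k <= (1 - theta^-1) ^+ k * Phi 0%N.
  elim => [|k IH]; first by rewrite expr0 mul1r.
  apply: le_trans (rec k) _; rewrite exprS -mulrA; by apply: ler_wpM2l.
have DP : forall k, Delta k <= Phi k.
  move=> k; rewrite /Phi lerDl; apply: divr_ge0 => //.
  apply: mulr_ge0; last lra.
  by apply: mulr_ge0; apply: ltW.
have P0 : Phi 0%N <= Delta 0%N + Dk 0%N / (eta 0%N * gamma).
  rewrite /Phi lerD2l; apply: ler_wpM2l; first exact: Dk0.
  have p1 : 0 < eta 0%N * gamma by rewrite mulr_gt0.
  have p2 : 0 < eta 0%N * c * (theta - 1) by rewrite !mulr_gt0 //; lra.
  rewrite lef_pV2 ?posrE // -mulrA ler_pM2l //; rewrite /c in thc1 *; lra.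
move=> k; rewrite (@Vstar_eq _ _ _ P Rc gamma rho Hrho pistar Hs Hopt).
apply: le_trans (DP k) _; apply: le_trans (bnd k) _; apply: ler_wpM2l.
  exact: exprn_ge0.
exact: P0.
Qed.
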